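(* Let $X=\{x_1,\dots,x_n\}$ be a set of Boolean variables and $\mathcal{C}=\{C_1,\dots,C_m\}$ a set of clauses, each consisting of exactly three positive literals. The graph $G'$ constructed from $(\mathcal{C},X)$ as described in the context is $(P_3+P_5)$-free.
   Context: First construct $(G,L)$: for each $x_i\in X$ introduce two adjacent vertices $x_i$ and $\overline{x}_i$ with $L(x_i)=L(\overline{x}_i)=\{4,5\}$. For each clause $C_j$ introduce two vertices $C_j,C_j'$ with $L(C_j)=L(C_j')=\{1,2,3\}$. Add an edge between every vertex of the form $x_i$ or $\overline{x}_i$ and every vertex of the form $C_j$ or $C_j'$. For each clause $C_j$, fix an order of its literals, say $C_j=\{x_g,x_h,x_i\}$, and add six new vertices $a_{g,j},a_{h,j},a_{i,j},a'_{g,j},a'_{h,j},a'_{i,j}$ with edges $x_ga_{g,j}$, $a_{g,j}C_j$, $x_ha_{h,j}$, $a_{h,j}C_j$, $x_ia_{i,j}$, $a_{i,j}C_j$, $\overline{x}_ga'_{g,j}$, $a'_{g,j}C_j'$, $\overline{x}_ha'_{h,j}$, $a'_{h,j}C_j'$, $\overline{x}_ia'_{i,j}$, $a'_{i,j}C_j'$, and lists $L(a_{g,j})=L(a'_{g,j})=\{1,4\}$, $L(a_{h,j})=L(a'_{h,j})=\{2,4\}$, $L(a_{i,j})=L(a'_{i,j})=\{3,4\}$. Then $G'$ is obtained from $G$ by adding a clique on five new vertices $k_1,\dots,k_5$ and adding an edge between $k_\ell$ and a vertex $u\in V(G)$ if and only if $\ell\notin L(u)$. $P_n$ denotes the path on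 $n$ vertices, $P_3+P_5$ the disjoint union of $P_3$ and $P_5$, and a graph is $H$-free if it has no induced subgraph isomorphic to $H$. *)

(* Defs.v *)
From mathcomp Require Import all_boot.
Set Implicit Arguments. Unset Strict Implicit. Unset Printing Implicit Defensive.

(* Vertex type of G' for n variables and m clauses:
   inl (inl (inl (i, b)))  : x_i (b = false) or \overline{x}_i (b = true), i : 'I_n
   inl (inl (inr (j, b)))  : C_j (b = false) or C_j' (b = true),            j : 'I_m
   inl (inr (k, j, b))     : a_{g,j} (b = false) or a'_{g,j} (b = true), where g is
                             the k-th literal (k : 'I_3, in the fixed order) of C_j
   inr l                   : k_{l+1},  l : 'I_5 *)
Definition vert (n m : nat) : finType :=
  (('I_n * bool + 'I_m * bool) + 'I_3 * 'I_m * bool + 'I_5)%type.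

(* Lists L(u) (colours 1..5) for vertices of G; the k-vertices are not in G. *)
Definition lst (n m : nat) (v : vert n m) : seq nat :=
  match v with
  | inl (inl (inl _)) => [:: 4; 5]
  | inl (inl (inr _)) => [:: 1; 2; 3]
  | inl (inr (k, _, _)) => [:: (nat_of_ord k).+1; 4]
  | inr _ => [::]
  end.

(* Oriented edges of G; clause j is (cl j 0, cl j 1, cl j 2) = (x_g, x_h, x_i). *)
Definition edgeG (n m : nat) (cl : 'I_m -> 'I_3 -> 'I_n) (u v : vert n m) : bool :=
  match u, v with
  | inl (inl (inl (i, b))), inl (inl (inl (i', b'))) => (i == i') && (b != b')
  | inl (inl (inl _)), inl (inl (inr _)) => true
  | inl (inl (inl (i, b))), inl (inr (k, j, b')) => (b == b') && (cl j k == i)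
  | inl (inl (inr (j, b))), inl (inr (k, j', b')) => (j == j') && (b == b')
  | _, _ => false
  end.

Definition adjG' (n m : nat) (cl : 'I_m -> 'I_3 -> 'I_n) (u v : vert n m) : bool :=
  match u, v with
  | inr l, inr l' => l != l'
  | inr l, w => (nat_of_ord l).+1 \notin lst w
  | w, inr l => (nat_of_ord l).+1 \notin lst w
  | _, _ => edgeG cl u v || edgeG cl v u
  end.

(* The graph P_3 + P_5 on 'I_8: paths 0-1-2 and 3-4-5-6-7. *)
Definition P3P5 (i j : 'I_8) : bool :=
  [|| (i.+1 == j) | (j.+1 == i)] && ~~ ((i == 2 :> nat) && (j == 3 :> nat) ||
                                        (i == 3 :> nat) && (j == 2 :> nat)).

Definition induced_free (T : finType) (adj : rel T) (k : nat) (H : rel 'I_k) : Prop :=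
  ~ exists f : 'I_k -> T, injective f /\ forall i j, adj (f i) (f j) = H i j.

(* Main.v *)
Require Import Defs.
From mathcomp Require Import all_boot.
Set Implicit Arguments. Unset Strict Implicit. Unset Printing Implicit Defensive.

Section Adj.
Variables (n m : nat) (cl : 'I_m -> 'I_3 -> 'I_n).
Local Notation V := (vert n m).
Local Notation adj := (@adjG' n m cl).

Definition isX (v : V) := if v is inl (inl (inl _)) then true else false.
Definition isC (v : V) := if v is inl (inl (inr _)) then true else false.
Definition isA (v : V) := if v is inl (inr _) then true else false.
Definition isK (v : V) := if v is inr _ then true else false.

Lemma kindA (v : V) : ~~ isX v -> ~~ isC v -> ~~ isK v -> isA v.
Proof. by case: v => [[[[i b]|[j b]]|[[k j] b]]|l]. Qed.

Lemma adj_sym (u v : V) : adj u v = adj v u.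
Proof.
case: u => [[[[i b]|[j b]]|[[k j] b]]|l];
case: v => [[[[i' b']|[j' b']]|[[k' j'] b']]|l'] //=; try by rewrite orbC.
by rewrite eq_sym.
Qed.

Lemma adjXC (u v : V) : isX u -> isC v -> adj u v.
Proof.
by case: u => [[[[i b]|[j b]]|[[k j] b]]|l];
case: v => [[[[i' b']|[j' b']]|[[k' j'] b']]|l'].
Qed.

Lemma adjCC (u v : V) : isC u -> isC v -> ~~ adj u v.
Proof.
by case: u => [[[[i b]|[j b]]|[[k j] b]]|l];
case: v => [[[[i' b']|[j' b']]|[[k' j'] b']]|l'].
Qed.

Lemma adjAA (u v : V) : isA u -> isA v -> ~~ adj u v.
Proof.
by case: u => [[[[i b]|[j b]]|[[k j] b]]|l];
case: v => [[[[i' b']|[j' b']]|[[k' j'] b']]|l'].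
Qed.

Lemma adjKK (l l' : 'I_5) : l != l' -> adj (inr l) (inr l').
Proof. by []. Qed.

Lemma adjXX (u v w : V) : isX u -> isX v -> isX w -> adj u v -> adj u w -> v = w.
Proof.
case: u => [[[[i b]|[j b]]|[[k j] b]]|l] //;
case: v => [[[[i' b']|[j' b']]|[[k' j'] b']]|l'] //;
case: w => [[[[i'' b'']|[j'' b'']]|[[k'' j''] b'']]|l''] //= _ _ _.
case: b b' b'' => [] [] [] //=; rewrite ?andbF ?andbT ?orbF //=;
rewrite ?(eq_sym i') ?(eq_sym i'') ?orbb => /eqP <- /eqP <-.
all: by [].
Qed.

Lemma adjAX (a x y : V) : isA a -> isX x -> isX y -> adj a x -> adj a y -> x = y.
Proof.
case: a => [[[[i b]|[j b]]|[[k j] b]]|l] //;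
case: x => [[[[i' b']|[j' b']]|[[k' j'] b']]|l'] //;
case: y => [[[[i'' b'']|[j'' b'']]|[[k'' j''] b'']]|l''] //= _ _ _.
by case/andP=> /eqP -> /eqP -> /andP [/eqP -> /eqP ->].
Qed.

Lemma adjAC (a x y : V) : isA a -> isC x -> isC y -> adj a x -> adj a y -> x = y.
Proof.
case: a => [[[[i b]|[j b]]|[[k j] b]]|l] //;
case: x => [[[[i' b']|[j' b']]|[[k' j'] b']]|l'] //;
case: y => [[[[i'' b'']|[j'' b'']]|[[k'' j''] b'']]|l''] //= _ _ _.
by case/andP=> /eqP -> /eqP -> /andP [/eqP -> /eqP ->].
Qed.

Lemma adjKX (l : 'I_5) (v : V) : l < 3 -> isX v -> adj (inr l) v.
Proof.
case: v => [[[[i b]|[j b]]|[[k j] b]]|l'] //=; 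
by case: l => [[|[|[|[|[|?]]]]] ?].
Qed.

Lemma adjKC (l : 'I_5) (v : V) : 3 <= l -> isC v -> adj (inr l) v.
Proof.
case: v => [[[[i b]|[j b]]|[[k j] b]]|l'] //=; 
by case: l => [[|[|[|[|[|?]]]]] ?].
Qed.

Lemma adjKA (l : 'I_5) (v : V) : l = 4 :> nat -> isA v -> adj (inr l) v.
Proof.
case: v => [[[[i b]|[j b]]|[[k j] b]]|l'] //= -> _.
by case: k => [[|[|[|?]]] ?].
Qed.

Lemma adjK3 (l : 'I_5) (v : V) : l = 3 :> nat -> adj (inr l) v -> isC v || isK v.
Proof.
by case: v => [[[[i b]|[j b]]|[[k j] b]]|l'] //= ->; rewrite !inE // orbT.
Qed.

Lemma adjCAA (l : 'I_5) (c a1 a2 : V) : isC c -> isA a1 -> isA a2 ->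
  adj c a1 -> adj c a2 -> a1 != a2 -> l < 3 ->
  ~~ adj (inr l) a1 -> ~~ adj (inr l) a2 -> False.
Proof.
case: c => [[[[i b]|[j b]]|[[k j] b]]|l0] //;
case: a1 => [[[[i' b']|[j' b']]|[[k' j'] b']]|l'] //;
case: a2 => [[[[i'' b'']|[j'' b'']]|[[k'' j''] b'']]|l''] //= _ _ _.
rewrite !orbF.
case/andP=> /eqP <- /eqP <- /andP [/eqP <- /eqP <-] hne hl.
rewrite !negbK !inE => h1 h2.
have e1 : nat_of_ord l = k'.
  by case/orP: h1 => /eqP; [case | move=> e; move: hl; rewrite -ltnS e].
have e2 : nat_of_ord l = k''.
  by case/orP: h2 => /eqP; [case | move=> e; move: hl; rewrite -ltnS e].
have ek : k' = k'' by apply: val_inj; rewrite /= -e1 -e2.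
by move: hne; rewrite ek eqxx.
Qed.
End Adj.
Lemma F1 (i j : 'I_8) : P3P5 i j -> (i < 3) = (j < 3).
Proof.
by case: i => [[|[|[|[|[|[|[|[|i]]]]]]]] hi] //;
case: j => [[|[|[|[|[|[|[|[|j]]]]]]]] hj].
Qed.
Lemma F2 (i : 'I_8) : exists j, P3P5 i j.
Proof.
case: i => [[|[|[|[|[|[|[|[|i]]]]]]]] hi] //.
- by exists (@Ordinal 8 1 isT).
- by exists (@Ordinal 8 0 isT).
- by exists (@Ordinal 8 1 isT).
- by exists (@Ordinal 8 4 isT).
- by exists (@Ordinal 8 3 isT).
- by exists (@Ordinal 8 4 isT).
- by exists (@Ordinal 8 5 isT).
- by exists (@Ordinal 8 6 isT).
Qed.
Lemma F3 (i : 'I_8) : P3P5 i i = false.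
Proof. by case: i => [[|[|[|[|[|[|[|[|i]]]]]]]] hi]. Qed.

Theorem lemma3 (n m : nat) (cl : 'I_m -> 'I_3 -> 'I_n)
  (Hcl : forall j, injective (cl j))
  (Hdist : forall j j', j != j' -> [set cl j k | k : 'I_3] != [set cl j' k | k : 'I_3]) :
  induced_free (@adjG' n m cl) P3P5.
Proof.
move=> [f [finj fadj]].
have nadj : forall i j : 'I_8, (i < 3) != (j < 3) -> adjG' cl (f i) (f j) = false.
  move=> i j hc; rewrite fadj; apply/negP => /F1 e; by rewrite e eqxx in hc.
have finj' : forall i j : 'I_8, i != j -> f i != f j.
  by move=> i j; apply: contra => /eqP /finj ->.
have KK : forall i j : 'I_8, isK (f i) -> isK (f j) -> (i < 3) != (j < 3) -> False.
  move=> i j; case E1: (f i) => [|l] //; case E2: (f j) => [|l'] // _ _ hc.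
  have := nadj i j hc; rewrite E1 E2 /= => /negbT; rewrite negbK => /eqP ell.
  have ij : i = j by apply: finj; rewrite E1 E2 ell.
  by rewrite ij eqxx in hc.
have noXC : forall i j : 'I_8, isX (f i) -> isC (f j) -> False.
  move=> i j hX hC.
  have e := adjXC cl hX hC; rewrite fadj in e; have hc := F1 e.
  have [z1 [z2 [ez [hz1 hz2]]]] : exists z1 z2 : 'I_8,
      P3P5 z1 z2 /\ (z1 < 3) != (i < 3) /\ (z2 < 3) != (i < 3).
    case: (i < 3).
    - by exists (@Ordinal 8 3 isT), (@Ordinal 8 4 isT).
    - by exists (@Ordinal 8 0 isT), (@Ordinal 8 1 isT).
  have isAz : forall z : 'I_8, (z < 3) != (i < 3) -> isA (f z).
    move=> z hz; have hzj : (z < 3) != (j < 3) by rewrite -hc.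
    have hiz : (i < 3) != (z < 3) by rewrite eq_sym.
    apply: kindA.
    - by apply/negP => hx; move: (adjXC cl hx hC); rewrite nadj.
    - by apply/negP => hc'; move: (adjXC cl hX hc'); rewrite nadj.
    - case E: (f z) => [|l] //; case: (ltnP l 3) => hl.
      + by move: (adjKX cl hl hX); rewrite -E adj_sym nadj.
      + by move: (adjKC cl hl hC); rewrite -E nadj.
  by move: (adjAA cl (isAz z1 hz1) (isAz z2 hz2)); rewrite fadj ez.
have noXorC : (forall i, ~~ isX (f i)) \/ (forall i, ~~ isC (f i)).
  case: (boolP [exists i, isX (f i)]) => [/existsP [i hX]|]; last first.
    by move/existsPn; left.
  by right => j; apply/negP => hC; exact: noXC hX hC.
have centerC : forall w0 w1 w2 : 'I_8, P3P5 w0 w1 -> P3P5 w0 w2 -> w1 != w2 ->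
    ~~ isK (f w0) -> ~~ isK (f w1) -> ~~ isK (f w2) -> (forall i, ~~ isC (f i)) ->
    isX (f w0) && ~~ (isX (f w1) && isX (f w2)).
  move=> w0 w1 w2 e1 e2 hne k0 k1 k2 noC.
  have A01 : adjG' cl (f w0) (f w1) by rewrite fadj.
  have A02 : adjG' cl (f w0) (f w2) by rewrite fadj.
  have hne' := finj' _ _ hne.
  case hX0: (isX (f w0)); last first.
    have hA0 : isA (f w0) by apply: kindA; rewrite ?hX0 ?noC ?k0.
    have x1 : isX (f w1).
      by apply/negPn/negP => h; move: (adjAA cl hA0 (kindA h (noC w1) k1)); rewrite A01.
    have x2 : isX (f w2).
      by apply/negPn/negP => h; move: (adjAA cl hA0 (kindA h (noC w2) k2)); rewrite A02.
    by move: hne'; rewrite (adjAX hA0 x1 x2 A01 A02) eqxx.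
  apply/negP => /andP [x1 x2].
  by move: hne'; rewrite (adjXX hX0 x1 x2 A01 A02) eqxx.
have centerX : forall w0 w1 w2 : 'I_8, P3P5 w0 w1 -> P3P5 w0 w2 -> w1 != w2 ->
    ~~ isK (f w0) -> ~~ isK (f w1) -> ~~ isK (f w2) -> (forall i, ~~ isX (f i)) ->
    [&& isC (f w0), isA (f w1) & isA (f w2)].
  move=> w0 w1 w2 e1 e2 hne k0 k1 k2 noX.
  have A01 : adjG' cl (f w0) (f w1) by rewrite fadj.
  have A02 : adjG' cl (f w0) (f w2) by rewrite fadj.
  have hne' := finj' _ _ hne.
  case hC0: (isC (f w0)); last first.
    have hA0 : isA (f w0) by apply: kindA; rewrite ?hC0 ?noX ?k0.
    have c1 : isC (f w1).
      by apply/negPn/negP => h; move: (adjAA cl hA0 (kindA (noX w1) h k1)); rewrite A01.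
    have c2 : isC (f w2).
      by apply/negPn/negP => h; move: (adjAA cl hA0 (kindA (noX w2) h k2)); rewrite A02.
    by move: hne'; rewrite (adjAC hA0 c1 c2 A01 A02) eqxx.
  have nc1 : ~~ isC (f w1) by apply/negP => h; move: (adjCC cl hC0 h); rewrite A01.
  have nc2 : ~~ isC (f w2) by apply/negP => h; move: (adjCC cl hC0 h); rewrite A02.
  by rewrite /= (kindA (noX w1) nc1 k1) (kindA (noX w2) nc2 k2).
pose o k (H : k < 8) := @Ordinal 8 k H.
case: (boolP [exists z, isK (f z)]) => [/existsP [z hz]|/existsPn nK]; last first.
  case: noXorC => [noX|noC].
  - have /and3P [c4 _ _] := centerX (o 4 isT) (o 3 isT) (o 5 isT) isT isT isT
      (nK _) (nK _) (nK _) noX.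
    have /and3P [c5 _ _] := centerX (o 5 isT) (o 4 isT) (o 6 isT) isT isT isT
      (nK _) (nK _) (nK _) noX.
    by move: (adjCC cl c4 c5); rewrite fadj.
  - have /andP [x4 _] := centerC (o 4 isT) (o 3 isT) (o 5 isT) isT isT isT
      (nK _) (nK _) (nK _) noC.
    have /andP [x6 _] := centerC (o 6 isT) (o 5 isT) (o 7 isT) isT isT isT
      (nK _) (nK _) (nK _) noC.
    have /andP [_ h] := centerC (o 5 isT) (o 4 isT) (o 6 isT) isT isT isT
      (nK _) (nK _) (nK _) noC.
    by rewrite x4 x6 in h.
have [w0 [w1 [w2 [e1 [e2 [hne [h0 [h1 h2]]]]]]]] : exists w0 w1 w2 : 'I_8,
    [/\ P3P5 w0 w1, P3P5 w0 w2, w1 != w2 &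
     [/\ (w0 < 3) != (z < 3), (w1 < 3) != (z < 3) & (w2 < 3) != (z < 3)]].
  case: (z < 3).
  - by exists (o 4 isT), (o 3 isT), (o 5 isT).
  - by exists (o 1 isT), (o 0 isT), (o 2 isT).
have nKw : forall w : 'I_8, (w < 3) != (z < 3) -> ~~ isK (f w).
  by move=> w hw; apply/negP => hk; apply: (KK w z hk hz hw).
have k0 := nKw _ h0; have k1 := nKw _ h1; have k2 := nKw _ h2.
have A01 : adjG' cl (f w0) (f w1) by rewrite fadj.
have A02 : adjG' cl (f w0) (f w2) by rewrite fadj.
have zw : forall w : 'I_8, (w < 3) != (z < 3) -> adjG' cl (f z) (f w) = false.
  by move=> w hw; apply: nadj; rewrite eq_sym.
case: noXorC => [noX|noC].
- have /and3P [c0 a1 a2] := centerX w0 w1 w2 e1 e2 hne k0 k1 k2 noX.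
  case E: (f z) hz => [|l] // _.
  case: (ltnP l 3) => hl.
  + apply: (adjCAA c0 a1 a2 A01 A02 (finj' _ _ hne) hl).
    * by rewrite -E zw.
    * by rewrite -E zw.
  + by move: (adjKC cl hl c0); rewrite -E zw.
- have /andP [x0 nx12] := centerC w0 w1 w2 e1 e2 hne k0 k1 k2 noC.
  have [z' [l' [Ez' [hz' hl']]]] : exists (z' : 'I_8) (l' : 'I_5),
      [/\ f z' = inr l', (z' < 3) = (z < 3) & nat_of_ord l' != 3].
    case E: (f z) hz => [|l] // _.
    case: (eqVneq (nat_of_ord l) 3) => hl3; last by exists z, l.
    have [z' ez'] := F2 z.
    have az : adjG' cl (inr l) (f z') by rewrite -E fadj.
    have /orP [hc|hk] := adjK3 hl3 az; first by move: (noC z'); rewrite hc.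
    case E': (f z') hk => [|l'] // _.
    exists z', l'; split => //; first by rewrite (F1 ez').
    apply/eqP => h.
    have ll : l = l' by apply: val_inj; rewrite /= hl3 h.
    have zz : z = z' by apply: finj; rewrite E E' ll.
    by move: ez'; rewrite -zz F3.
  have zw' : forall w : 'I_8, (w < 3) != (z < 3) -> adjG' cl (inr l') (f w) = false.
    by move=> w hw; rewrite -Ez'; apply: nadj; rewrite hz' eq_sym.
  case: (ltnP l' 3) => hl.
  + by move: (adjKX cl hl x0); rewrite zw'.
  + have l4 : nat_of_ord l' = 4.
      by move: hl hl' (ltn_ord l'); case: (nat_of_ord l') => [|[|[|[|[|[|?]]]]]].
    case hx1 : (isX (f w1)) nx12 => /= nx2.
    * have a2 := kindA nx2 (noC w2) k2.
      by move: (adjKA cl l4 a2); rewrite zw'.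
    * have a1 := kindA (negbT hx1) (noC w1) k1.
      by move: (adjKA cl l4 a1); rewrite zw'.
Qed.
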